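(* Let $V=\Sigma^aH(b)$ and $W=\Sigma^sH(t)$ be representation cells (so $0\le b\le a$ and $0\le t\le s$) with $a\geq s$, and with $b\geq t$ in case $a=s$. Then for any map $f\colon\Sigma^{-1}V\to W$ in $\mathcal D(\underline{\mathbb Z/2})$, exactly one of the following holds: (1) $\mathrm{tp}(\Sigma^{-1}V)=\mathrm{tp}(W)$ and $\mathrm{cowt}(\Sigma^{-1}V)=\mathrm{cowt}(W)$ (so $\Sigma^{-1}V=W$) and $f$ is homotopic to the identity; (2) $\mathrm{tp}(\Sigma^{-1}V)=\mathrm{tp}(W)$ and $\mathrm{cowt}(\Sigma^{-1}V)>\mathrm{cowt}(W)$, and $f$ is homotopic to the chain map which is the identity $F\to F$ in each degree where $\Sigma^{-1}V$ has an $F$, and is $p\colon H\to F$ in degree $\mathrm{cowt}(\Sigma^{-1}V)$; (3) $\mathrm{tp}(\Sigma^{-1}V)\ge\mathrm{tp}(W)$ and $\mathrm{cowt}(\Sigma^{-1}V)\le\mathrm{cowt}(W)-2$, and $f$ is homotopic to the chain map which is $u\colon F\to F$ in degree $\mathrm{tp}(W)$ and zero in all other degrees; (4) $f$ is null-homotopic.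
   Context: A $\underline{\mathbb Z/2}$-module is a pair of $\mathbb F_2$-vector spaces $M_\Theta,M_\bullet$ with maps $t\colon M_\Theta\to M_\Theta$, $p^*\colon M_\bullet\to M_\Theta$, $p_*\colon M_\Theta\to M_\bullet$ with $tp^*=p^*$, $p_*t=p_*$, $t^2=1$, $p^*p_*=1+t$, $p_*p^*=0$. $H$: both spaces $\mathbb F_2$, $t=p^*=\mathrm{id}$, $p_*=0$. $F$: $F_\Theta=\mathbb F_2^2$, $t$ the swap, $F_\bullet=\mathbb F_2$, $p_*(x,y)=x+y$, $p^*(z)=(z,z)$. $p\colon F\to H$ and $p\colon H\to F$ are the unique nonzero maps; $u=1+t\colon F\to F$. Homological grading, $(\Sigma C)_i=C_{i-1}$. $H(0)=H$ in degree $0$; for $q>0$, $H(q)$ is $F\xrightarrow{u}\cdots\xrightarrow{u}F\xrightarrow{p}H$ with $F$ in degrees $0,\dots,-(q-1)$ and $H$ in degree $-q$. A representation cell is a complex $\Sigma^mH(q)$ with $0\le q\le m$; for such a complex (and its desuspensions $\Sigma^{m-1}H(q)$, treated the same way) the topological dimension $\mathrm{tp}$ is the degree of its top $F$ (namely $m$ for $\Sigma^mH(q)$), the weight is $q$, and the coweight $\mathrm{cowt}$ is the degree $m-q$ of its bottom $H$. $\mathcal D(\underline{\mathbb Z/2})$ is the derived category; ''homotopic'' means equal in $\mathcal D(\underline{\mathbb Z/2})$ (equivalently chain homotopic, as these complexes are bounded complexes of projectives). *)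

(* Defs.v *)
From mathcomp Require Import all_boot all_order all_algebra.
Set Implicit Arguments. Unset Strict Implicit. Unset Printing Implicit Defensive.
Import GRing.Theory.
Local Open Scope ring_scope.

(* A Z/2-module: M_Theta = F_2^dT, M_bullet = F_2^dB (row vectors, maps act
   on the right: x |-> x *m A).  tm = t, psu = p^*, psl = p_*. *)
Record z2mod := Z2Mod {
  dT : nat; dB : nat;
  tm : 'M['F_2]_(dT);
  psu : 'M['F_2]_(dB, dT);
  psl : 'M['F_2]_(dT, dB)
}.

Definition z2mod_axioms (M : z2mod) : Prop :=
  [/\ psu M *m tm M = psu M, tm M *m psl M = psl M, tm M *m tm M = 1%:M,
      psl M *m psu M = 1%:M + tm M & psu M *m psl M = 0].

Definition mor (M N : z2mod) := ('M['F_2]_(dT M, dT N) * 'M['F_2]_(dB M, dB N))%type.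

Definition is_mor (M N : z2mod) (f : mor M N) : Prop :=
  [/\ tm M *m f.1 = f.1 *m tm N,
      psu M *m f.1 = f.2 *m psu N &
      psl M *m f.2 = f.1 *m psl N].

(* composition in diagrammatic order: first f then g *)
Definition mcomp (M N P : z2mod) (f : mor M N) (g : mor N P) : mor M P :=
  (f.1 *m g.1, f.2 *m g.2).
Definition madd (M N : z2mod) (f g : mor M N) : mor M N := (f.1 + g.1, f.2 + g.2).
Definition msub (M N : z2mod) (f g : mor M N) : mor M N := (f.1 - g.1, f.2 - g.2).
Definition mzero (M N : z2mod) : mor M N := (0, 0).
Arguments mzero {M N}.

(* INDEXING CONVENTION: the object at
   index n : nat sits in homological degree n - 1 (so degrees >= -1; all
   complexes here vanish in degrees <= -2).  cdif n : C_{n+1} -> C_n. *)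
Record cplx := Cplx {
  cobj : nat -> z2mod;
  cdif : forall n, mor (cobj n.+1) (cobj n)
}.

Definition is_cplx (C : cplx) : Prop :=
  (forall n, is_mor (cdif C n)) /\
  (forall n, mcomp (cdif C n.+1) (cdif C n) = mzero).

Definition is_chain_map (C D : cplx) (f : forall n, mor (cobj C n) (cobj D n)) : Prop :=
  (forall n, is_mor (f n)) /\
  (forall n, mcomp (cdif C n) (f n) = mcomp (f n.+1) (cdif D n)).

Definition homotopic (C D : cplx) (f g : forall n, mor (cobj C n) (cobj D n)) : Prop :=
  exists h : forall n, mor (cobj C n) (cobj D n.+1),
    (forall n, is_mor (h n)) /\
    msub (f 0%N) (g 0%N) = mcomp (h 0%N) (cdif D 0) /\
    (forall n, msub (f n.+1) (g n.+1) =
               madd (mcomp (cdif C n) (h n)) (mcomp (h n.+1) (cdif D n.+1))).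

Definition swap2 : 'M['F_2]_2 := \matrix_(i < 2, j < 2) (i != j)%:R.
Definition Fmod : z2mod := @Z2Mod 2 1 swap2 (const_mx 1) (const_mx 1).
Definition Hmod : z2mod := @Z2Mod 1 1 1 1 0.
Definition Zmod : z2mod := @Z2Mod 0 0 0 0 0.

Inductive kind := K0 | KF | KH.
Definition modOf (k : kind) : z2mod :=
  match k with K0 => Zmod | KF => Fmod | KH => Hmod end.

Definition idF : mor Fmod Fmod := (1%:M, 1%:M).
Definition idH : mor Hmod Hmod := (1%:M, 1%:M).
Definition uF  : mor Fmod Fmod := (const_mx 1, 0).        (* u = 1 + t *)
Definition pFH : mor Fmod Hmod := (const_mx 1, 0).        (* (x,y) |-> x+y *)
Definition pHF : mor Hmod Fmod := (const_mx 1, 1%:M).     (* z |-> (z,z) *)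

Inductive stdk := sId | sP | sU.
Definition std (s : stdk) (k1 k2 : kind) : mor (modOf k1) (modOf k2) :=
  match k1 as x1, k2 as x2 return mor (modOf x1) (modOf x2) with
  | KF, KF => match s with sId => idF | sU => uF | sP => mzero end
  | KH, KH => match s with sId => idH | _ => mzero end
  | KF, KH => match s with sP => pFH | _ => mzero end
  | KH, KF => match s with sP => pHF | _ => mzero end
  | _, _ => mzero
  end.

Definition kindc (lo q k : nat) : kind :=
  (if k == lo then KH else if (lo < k) && (k <= lo + q) then KF else K0)%N.

Definition cellc (lo q : nat) : cplx :=
  @Cplx (fun n => modOf (kindc lo q n))
        (fun n => std (if n == lo then sP else sU) (kindc lo q n.+1) (kindc lo q n)).

(* Sigma^m H(q) (H in degree m - q, i.e. index m - q + 1) *)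
Definition cell (m q : nat) : cplx := cellc (m - q).+1 q.
(* Sigma^{-1} (Sigma^m H(q)) = Sigma^{m-1} H(q) (H in degree m-q-1, index m-q) *)
Definition dcell (m q : nat) : cplx := cellc (m - q) q.

Definition tp_cell (m q : nat) : int := m%:Z.
Definition cowt_cell (m q : nat) : int := m%:Z - q%:Z.
Definition tp_dcell (m q : nat) : int := m%:Z - 1.
Definition cowt_dcell (m q : nat) : int := m%:Z - q%:Z - 1.

Definition cmap (a b s t : nat) :=
  forall n, mor (cobj (dcell a b) n) (cobj (cell s t) n).

Definition map1 (a b s t : nat) : cmap a b s t :=
  fun n => std sId (kindc (a - b) b n) (kindc (s - t).+1 t n).
Definition map2 (a b s t : nat) : cmap a b s t :=
  fun n => std (if n == (a - b)%N then sP else sId)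
               (kindc (a - b) b n) (kindc (s - t).+1 t n).
(* u : F -> F in degree tp(W) (index s+1), zero elsewhere.  If W = Sigma^s H(0)
   has H (not F) in degree tp(W), the map there is p : F -> H. *)
Definition map3 (a b s t : nat) : cmap a b s t :=
  fun n => if n == s.+1
           then std (if kindc (s - t).+1 t n is KF then sU else sP)
                    (kindc (a - b) b n) (kindc (s - t).+1 t n)
           else mzero.
Definition map0 (a b s t : nat) : cmap a b s t := fun n => mzero.

Definition exactly_one4 (P1 P2 P3 P4 : Prop) : Prop :=
  (P1 \/ P2 \/ P3 \/ P4) /\
  ~ (P1 /\ P2) /\ ~ (P1 /\ P3) /\ ~ (P1 /\ P4) /\
  ~ (P2 /\ P3) /\ ~ (P2 /\ P4) /\ ~ (P3 /\ P4).

(* Main.v *)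
Require Import Defs.
From mathcomp Require Import all_boot all_order all_algebra.
From mathcomp Require Import zify.
Import GRing.Theory Num.Theory.
Local Open Scope ring_scope.

Module Aux.
Set Implicit Arguments. Unset Strict Implicit. Unset Printing Implicit Defensive.

Lemma F2cases (x : 'F_2) : x = 0 \/ x = 1.
Proof. case: x => [[|[|n]] Hx]; [left|right|by []]; exact: val_inj. Qed.

Ltac f2brute := repeat match goal with x : 'F_2 |- _ => (case: (F2cases x) => ?; subst x) end.
Ltac ordcase := repeat match goal with i : 'I_ _ |- _ =>
   let H := fresh "Hi" in case: i => [[|[|?]] H] // end.

Definition isz (k : kind) := if k is K0 then true else false.
Definition isFF (k1 k2 : kind) := match k1, k2 with KF, KF => true | _, _ => false end.

Definition mk (k1 k2 : kind) (x y : 'F_2) : mor (modOf k1) (modOf k2) :=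
  match k1 as a, k2 as b return mor (modOf a) (modOf b) with
  | KF, KF => (\matrix_(i < 2, j < 2) (if i == j then x else y), const_mx (x + y))
  | KF, KH => (const_mx x, 0)
  | KH, KF => (const_mx x, const_mx x)
  | KH, KH => (const_mx x, const_mx x)
  | _, _ => (0, 0)
  end.

Definition xco (k1 k2 : kind) : mor (modOf k1) (modOf k2) -> 'F_2 :=
  match k1 as a, k2 as b return mor (modOf a) (modOf b) -> 'F_2 with
  | KF, KF => fun m => m.1 ord0 ord0
  | KF, KH => fun m => m.1 ord0 ord0
  | KH, KF => fun m => m.1 ord0 ord0
  | KH, KH => fun m => m.1 ord0 ord0
  | _, _ => fun _ => 0
  end.
Definition yco (k1 k2 : kind) : mor (modOf k1) (modOf k2) -> 'F_2 :=
  match k1 as a, k2 as b return mor (modOf a) (modOf b) -> 'F_2 with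
  | KF, KF => fun m => m.1 ord0 ord_max
  | _, _ => fun _ => 0
  end.
Definition ecs (k1 k2 : kind) (x y : 'F_2) := if isFF k1 k2 then x + y else x.
Definition ec (k1 k2 : kind) (m : mor (modOf k1) (modOf k2)) := ecs k1 k2 (xco m) (yco m).

Definition dkx (k1 k2 : kind) : 'F_2 :=
  match k1, k2 with KF, KF => 1 | KF, KH => 1 | _, _ => 0 end.
Definition dk (k1 k2 : kind) := mk k1 k2 (dkx k1 k2) 1.

Definition t1f (kSp kS kT : kind) (e : 'F_2) : 'F_2 :=
  match kS, kSp, kT with
  | KF, KH, _ => e
  | KF, KF, KF => e
  | _, _, _ => 0 end.
Definition t2f (kS kTn : kind) (e : 'F_2) : 'F_2 :=
  match kS, kTn with KF, KF => e | _, _ => 0 end.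

Ltac mxsolve := rewrite /mcomp /madd /msub /mk /dk /=; congr pair; apply/matrixP => i j;
   rewrite !mxE ?big_ord_recl ?big_ord0; ordcase; rewrite ?mxE /=; f2brute; apply/eqP; by [].

Lemma is_mor_mk k1 k2 x y : is_mor (mk k1 k2 x y).
Proof.
case: k1; case: k2; rewrite /is_mor /=; split;
 apply/matrixP => i j; rewrite !mxE ?big_ord_recl ?big_ord0; ordcase; rewrite ?mxE /=; f2brute; apply/eqP; by [].
Qed.

Lemma lift00 : (lift ord0 ord0 : 'I_2) = ord_max. Proof. exact: val_inj. Qed.
Ltac ent E i j := let e := fresh "e" in move/matrixP: (E) => e; rewrite ?mul1mx ?mulmx1 ?mul0mx ?mulmx0 in e; have {e} e := e i j;
   rewrite /= !mxE ?big_ord_recl ?big_ord0 /= ?mxE /= ?lift00 ?(mul0r, mul1r, mulr0, mulr1, addr0, add0r) in e.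
Ltac ordn := repeat match goal with
  | |- context [@Ordinal ?n 0 ?H] => rewrite (_ : @Ordinal n 0 H = ord0); last exact: val_inj
  | |- context [@Ordinal ?n 1 ?H] => rewrite (_ : @Ordinal n 1 H = ord_max); last exact: val_inj
  end.

Lemma mor_mk k1 k2 (m : mor (modOf k1) (modOf k2)) : is_mor m -> m = mk k1 k2 (xco m) (yco m).
Proof.
case: m => m1 m2; case: k1 m1 m2; case: k2 => m1 m2; rewrite /is_mor /=; case => E1 E2 E3;
  try (congr pair; apply/matrixP => i j; ordcase; fail).
- ent E1 (ord0 : 'I_2) (ord0 : 'I_2).
  ent E1 (ord0 : 'I_2) (ord_max : 'I_2).
  ent E2 (ord0 : 'I_1) (ord0 : 'I_2).
  congr pair; apply/matrixP => i j; ordcase; rewrite !mxE /=; ordn => //.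
  by rewrite -e1 e.
- ent E1 (ord0 : 'I_2) (ord0 : 'I_1).
  ent E3 (ord0 : 'I_2) (ord0 : 'I_1).
  congr pair; apply/matrixP => i j; ordcase; rewrite !mxE /=; ordn => //.
- rewrite (mul1mx m1) in E1 E2.
  ent E1 (ord0 : 'I_1) (ord0 : 'I_2).
  ent E2 (ord0 : 'I_1) (ord0 : 'I_2).
  congr pair; apply/matrixP => i j; ordcase; rewrite !mxE /=; ordn => //.
- rewrite (mul1mx m1) (mulmx1 m2) in E2.
  have -> : m2 = m1 by [].
  congr pair; apply/matrixP => i j; ordcase; rewrite !mxE /=; ordn => //.
Qed.

Lemma mk_eq k1 k2 x y x' y' :
  (~~ isz k1 -> ~~ isz k2 -> x = x') -> (isFF k1 k2 -> y = y') ->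
  mk k1 k2 x y = mk k1 k2 x' y'.
Proof.
case: k1; case: k2 => //= H1 H2; rewrite ?H1 ?H2 //.
Qed.

Lemma xco_mk k1 k2 x y : xco (mk k1 k2 x y) = if isz k1 || isz k2 then 0 else x.
Proof. by case: k1; case: k2; rewrite /= ?mxE. Qed.
Lemma yco_mk k1 k2 x y : yco (mk k1 k2 x y) = if isFF k1 k2 then y else 0.
Proof. by case: k1; case: k2; rewrite /= ?mxE. Qed.

Lemma madd_mk k1 k2 x y x' y' : madd (mk k1 k2 x y) (mk k1 k2 x' y') = mk k1 k2 (x + x') (y + y').
Proof. case: k1; case: k2; mxsolve. Qed.
Lemma msub_mk k1 k2 x y x' y' : msub (mk k1 k2 x y) (mk k1 k2 x' y') = mk k1 k2 (x - x') (y - y').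
Proof. case: k1; case: k2; mxsolve. Qed.

Lemma CL kS kSp kT x y : mcomp (dk kS kSp) (mk kSp kT x y) =
  mk kS kT (t1f kSp kS kT (ecs kSp kT x y)) (t1f kSp kS kT (ecs kSp kT x y)).
Proof. case: kS; case: kSp; case: kT; rewrite /ecs /=; mxsolve. Qed.
Lemma CR kS kTn kT x y : mcomp (mk kS kTn x y) (dk kTn kT) =
  mk kS kT (t2f kS kTn (ecs kS kTn x y)) (t2f kS kTn (ecs kS kTn x y)).
Proof. case: kS; case: kTn; case: kT; rewrite /ecs /=; mxsolve. Qed.

Definition stdx (s : stdk) (k1 k2 : kind) : 'F_2 :=
  match k1, k2, s with
  | KF, KF, sId => 1 | KF, KF, sU => 1 | KF, KH, sP => 1 | KH, KF, sP => 1
  | KH, KH, sId => 1 | _, _, _ => 0 end.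
Definition stdy (s : stdk) (k1 k2 : kind) : 'F_2 :=
  match k1, k2, s with KF, KF, sU => 1 | _, _, _ => 0 end.

Lemma std_mk s k1 k2 : std s k1 k2 = mk k1 k2 (stdx s k1 k2) (stdy s k1 k2).
Proof. case: s; case: k1; case: k2; rewrite /std /idF /uF /pFH /pHF /idH /=; mxsolve. Qed.

Lemma mzero_mk k1 k2 : (mzero : mor (modOf k1) (modOf k2)) = mk k1 k2 0 0.
Proof. case: k1; case: k2; mxsolve. Qed.

Lemma xco_sub k1 k2 (m m' : mor (modOf k1) (modOf k2)) : xco (msub m m') = xco m - xco m'.
Proof. by case: k1 m m'; case: k2 => m m'; rewrite /= ?mxE ?subr0. Qed.
Lemma yco_sub k1 k2 (m m' : mor (modOf k1) (modOf k2)) : yco (msub m m') = yco m - yco m'.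
Proof. by case: k1 m m'; case: k2 => m m'; rewrite /= ?mxE ?subr0. Qed.
Lemma ec_sub k1 k2 (m m' : mor (modOf k1) (modOf k2)) : ec (msub m m') = ec m - ec m'.
Proof. rewrite /ec /ecs xco_sub yco_sub; case: ifP => _ //. by rewrite opprD addrACA. Qed.

Lemma cdif_dk lo q n : cdif (cellc lo q) n = dk (kindc lo q n.+1) (kindc lo q n).
Proof.
rewrite /= std_mk /dk; apply: mk_eq; rewrite /kindc;
 repeat case: ifP; move=> /= *; try done; try lia.
Qed.

Lemma ecs_y0 k1 k2 x : ecs k1 k2 x 0 = x.
Proof. by rewrite /ecs addr0; case: ifP. Qed.
Lemma t1f0 kS kT e : t1f K0 kS kT e = 0.
Proof. by case: kS; case: kT. Qed.
Lemma t1f_e0 kSp kS kT : t1f kSp kS kT 0 = 0.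
Proof. by case: kS; case: kSp; case: kT. Qed.
Lemma t2f_e0 kS kT : t2f kS kT 0 = 0.
Proof. by case: kS; case: kT. Qed.

Lemma xco_madd k1 k2 (m m' : mor (modOf k1) (modOf k2)) : xco (madd m m') = xco m + xco m'.
Proof. by case: k1 m m'; case: k2 => m m'; rewrite /= ?mxE ?addr0. Qed.

Lemma xco_CL kS kSp kT (m : mor (modOf kSp) (modOf kT)) : is_mor m ->
  xco (mcomp (dk kS kSp) m) = if isz kS || isz kT then 0 else t1f kSp kS kT (ec m).
Proof. move=> Hm; by rewrite {1}(mor_mk Hm) CL xco_mk. Qed.
Lemma xco_CR kS kTn kT (m : mor (modOf kS) (modOf kTn)) : is_mor m ->
  xco (mcomp m (dk kTn kT)) = if isz kS || isz kT then 0 else t2f kS kTn (ec m).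
Proof. move=> Hm; by rewrite {1}(mor_mk Hm) CR xco_mk. Qed.

Definition cm lo1 q1 lo2 q2 := forall n, mor (modOf (kindc lo1 q1 n)) (modOf (kindc lo2 q2 n)).
Definition kprev lo q n := if n is n'.+1 then kindc lo q n' else K0.
Definition aprev (a : nat -> 'F_2) n := if n is n'.+1 then a n' else 0.

Lemma homot lo1 q1 lo2 q2 (f g : cm lo1 q1 lo2 q2) (al : nat -> 'F_2) :
 (forall n, is_mor (f n)) -> (forall n, is_mor (g n)) ->
 (forall n, ~~ isz (kindc lo1 q1 n) -> ~~ isz (kindc lo2 q2 n) ->
    xco (msub (f n) (g n)) = t1f (kprev lo1 q1 n) (kindc lo1 q1 n) (kindc lo2 q2 n) (aprev al n)
                             + t2f (kindc lo1 q1 n) (kindc lo2 q2 n.+1) (al n)) ->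
 (forall n, isFF (kindc lo1 q1 n) (kindc lo2 q2 n) -> yco (msub (f n) (g n)) = xco (msub (f n) (g n))) ->
 @homotopic (cellc lo1 q1) (cellc lo2 q2) f g.
Proof.
move=> Hf Hg Hx Hy.
exists (fun n => mk (kindc lo1 q1 n) (kindc lo2 q2 n.+1) (al n) 0).
split; first by move=> n; exact: is_mor_mk.
split.
- rewrite cdif_dk CR (mor_mk (Hf 0)) (mor_mk (Hg 0)) msub_mk ecs_y0.
  have Hx0 := Hx 0; have Hy0 := Hy 0; rewrite xco_sub yco_sub /= t1f0 add0r in Hx0 Hy0.
  apply: mk_eq => [h1 h2|hff]; first exact: Hx0.
  by rewrite Hy0 // Hx0 //; move: hff; case: (kindc lo1 q1 0); case: (kindc lo2 q2 0).
- move=> n; rewrite !cdif_dk CL CR madd_mk !ecs_y0 (mor_mk (Hf n.+1)) (mor_mk (Hg n.+1)) msub_mk.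
  have Hx0 := Hx n.+1; have Hy0 := Hy n.+1; rewrite xco_sub yco_sub /= in Hx0 Hy0.
  apply: mk_eq => [h1 h2|hff]; first exact: Hx0.
  by rewrite Hy0 // Hx0 //; move: hff; case: (kindc lo1 q1 n.+1); case: (kindc lo2 q2 n.+1).
Qed.

Lemma homot_sc lo1 q1 lo2 q2 (f g : cm lo1 q1 lo2 q2) :
 @homotopic (cellc lo1 q1) (cellc lo2 q2) f g ->
 exists e : nat -> 'F_2, forall n, ~~ isz (kindc lo1 q1 n) -> ~~ isz (kindc lo2 q2 n) ->
    xco (msub (f n) (g n)) = t1f (kprev lo1 q1 n) (kindc lo1 q1 n) (kindc lo2 q2 n) (aprev e n)
                             + t2f (kindc lo1 q1 n) (kindc lo2 q2 n.+1) (e n).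
Proof.
case=> h [Hh [H0 HS]]; exists (fun n => ec (h n)); case=> [|n] h1 h2.
- by rewrite H0 cdif_dk (xco_CR _ (Hh 0)) (negbTE h1) (negbTE h2) /= t1f0 add0r.
- by rewrite HS xco_madd !cdif_dk (xco_CL _ (Hh n)) (xco_CR _ (Hh n.+1)) (negbTE h1) (negbTE h2).
Qed.

Lemma chain_sc lo1 q1 lo2 q2 (f : cm lo1 q1 lo2 q2) :
  @is_chain_map (cellc lo1 q1) (cellc lo2 q2) f ->
  forall n, ~~ isz (kindc lo1 q1 n.+1) -> ~~ isz (kindc lo2 q2 n) ->
  t1f (kindc lo1 q1 n) (kindc lo1 q1 n.+1) (kindc lo2 q2 n) (ec (f n)) =
  t2f (kindc lo1 q1 n.+1) (kindc lo2 q2 n.+1) (ec (f n.+1)).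
Proof.
case=> Hf Hc n h1 h2; have := congr1 (@xco _ _) (Hc n).
by rewrite !cdif_dk (xco_CL _ (Hf n)) (xco_CR _ (Hf n.+1)) (negbTE h1) (negbTE h2).
Qed.

Lemma kH lo q : kindc lo q lo = KH.
Proof. by rewrite /kindc eqxx. Qed.
Lemma kF lo q n : (lo < n)%N -> (n <= lo + q)%N -> kindc lo q n = KF.
Proof. move=> h1 h2; rewrite /kindc h1 h2 /=; case: eqP => //; lia. Qed.
Lemma k0l lo q n : (n < lo)%N -> kindc lo q n = K0.
Proof. move=> h; rewrite /kindc; case: eqP; first lia. move=> _; case: ifP => //; lia. Qed.
Lemma k0r lo q n : (lo + q < n)%N -> kindc lo q n = K0.
Proof. move=> h; rewrite /kindc; case: eqP; first lia. move=> _; case: ifP => //; lia. Qed.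
Lemma knz lo q n : ~~ isz (kindc lo q n) -> (lo <= n)%N && (n <= lo + q)%N.
Proof. rewrite /kindc; case: eqP => [->|_]; first by rewrite leqnn leq_addr. case: ifP => //; lia. Qed.
Lemma nzH lo q : ~~ isz (kindc lo q lo). Proof. by rewrite kH. Qed.
Lemma nzF lo q n : (lo < n)%N -> (n <= lo + q)%N -> ~~ isz (kindc lo q n).
Proof. by move=> h1 h2; rewrite kF. Qed.

Lemma oppF2 (x : 'F_2) : - x = x.
Proof. f2brute; apply/eqP; by []. Qed.
Lemma addF2K (x y : 'F_2) : x + y + y = x.
Proof. f2brute; apply/eqP; by []. Qed.
Lemma addF2_eq0 (x y : 'F_2) : x + y = 0 -> y = x.
Proof. f2brute; move/eqP => //= _; apply/eqP; by []. Qed.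
Lemma subF2 (x y : 'F_2) : x - y = x + y.
Proof. by rewrite oppF2. Qed.

Lemma ec_FF k1 k2 (m : mor (modOf k1) (modOf k2)) : isFF k1 k2 -> ec m = xco m + yco m.
Proof. by rewrite /ec /ecs => ->. Qed.
Lemma isFF_F k1 k2 : isFF k1 k2 -> k1 = KF /\ k2 = KF.
Proof. by case: k1; case: k2. Qed.

Lemma kFpos lo q n : kindc lo q n = KF -> (lo < n)%N && (n <= lo + q)%N.
Proof. rewrite /kindc; case: eqP => // _; case: ifP => //. Qed.

Lemma TD lo1 q1 lo2 q2 (f g : cm lo1 q1 lo2 q2) :
  (lo2 + q2 <= lo1 + q1)%N ->
  (forall n, is_mor (f n)) -> (forall n, is_mor (g n)) ->
  (forall n, (lo1 < n)%N -> (lo2 < n)%N -> (n <= lo2 + q2)%N -> ec (msub (f n) (g n)) = 0) ->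
  ((lo2 <= lo1)%N -> xco (msub (f lo1) (g lo1)) = 0) ->
  ((lo1.+2 <= lo2)%N -> \sum_(lo2 <= k < ((lo2 + q2)%N).+1) xco (msub (f k) (g k)) = 0) ->
  @homotopic (cellc lo1 q1) (cellc lo2 q2) f g.
Proof.
move=> hN Hf Hg G1 G2 G3.
pose z k := xco (msub (f k) (g k)).
pose al n := \sum_(n.+1 <= k < ((lo2 + q2)%N).+1) z k.
have alN : forall m, (lo2 + q2 <= m)%N -> al m = 0 by move=> m hm; rewrite /al big_geq //; lia.
have alS : forall m, (m < lo2 + q2)%N -> al m = z m.+1 + al m.+1.
  by move=> m hm; rewrite /al big_ltn //; lia.
apply: (homot (al := al)) => // n.
- move=> h1 h2; rewrite -/(z n).
  have /andP [a1 a2] := knz h1; have /andP [b1 b2] := knz h2.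
  have t2e : t2f KF (kindc lo2 q2 n.+1) (al n) = al n.
    case: (ltnP n (lo2 + q2)) => hn; first by rewrite kF //; lia.
    by rewrite alN // t2f_e0.
  case: (eqVneq n lo1) => [en|nen].
  + subst n; rewrite kH /= add0r; exact: G2.
  + have [n' en] : exists n', n = n'.+1 by exists n.-1; lia.
    subst n; rewrite /= (kF (n := n'.+1)); try lia; rewrite t2e.
    case: (eqVneq n'.+1 lo2) => [e2|ne2].
    * rewrite (_ : kindc lo2 q2 n'.+1 = KH); last by rewrite e2 kH.
      case: (eqVneq n' lo1) => [e1|ne1].
      -- subst n'; rewrite kH /= alS; last lia. by rewrite addF2K.
      -- rewrite (kF (n := n')); try lia; rewrite /= add0r.
         have := G3 ltac:(lia); rewrite big_ltn; last lia.
         by rewrite e2 => /addF2_eq0 E; rewrite /al /z E.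
    * rewrite (kF (lo := lo2) (n := n'.+1)); try lia.
      rewrite (_ : t1f (kindc lo1 q1 n') KF KF (al n') = al n'); last first.
        case: (eqVneq n' lo1) => [->|ne1]; first by rewrite kH.
        by rewrite kF //; lia.
      by rewrite alS ?addF2K //; lia.
- move=> hff; have [e1 e2] := isFF_F hff.
  have /andP [a1 a2] := kFpos e1; have /andP [b1 b2] := kFpos e2.
  have := G1 n a1 b1 b2; rewrite ec_FF // => /addF2_eq0 //.
Qed.

Lemma addF2KK (x y : 'F_2) : x = y + (y + x).
Proof. f2brute; apply/eqP; by []. Qed.

Lemma BU lo1 q1 lo2 q2 (f g : cm lo1 q1 lo2 q2) :
  (lo1 + q1 < lo2 + q2)%N -> (lo1 < lo2)%N ->
  (forall n, is_mor (f n)) -> (forall n, is_mor (g n)) ->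
  (forall n, (lo2 < n)%N -> (n <= lo1 + q1)%N -> ec (msub (f n) (g n)) = 0) ->
  @homotopic (cellc lo1 q1) (cellc lo2 q2) f g.
Proof.
move=> hN hL Hf Hg G1.
pose z k := xco (msub (f k) (g k)).
pose al n := \sum_(lo2 <= k < n.+1) z k.
apply: (homot (al := al)) => // n.
- move=> h1 h2; rewrite -/(z n).
  have /andP [a1 a2] := knz h1; have /andP [b1 b2] := knz h2.
  have [n' en] : exists n', n = n'.+1 by exists n.-1; lia.
  subst n; rewrite /= (kF (n := n'.+1)); try lia.
  rewrite (kF (lo := lo2) (n := n'.+2)); try lia.
  case: (eqVneq n'.+1 lo2) => [e2|ne2].
  + rewrite (_ : kindc lo2 q2 n'.+1 = KH); last by rewrite e2 kH.
    rewrite (_ : al n' = 0); last by rewrite /al big_geq //; lia.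
    by rewrite t1f_e0 add0r /al e2 big_nat1.
  + rewrite (kF (lo := lo2) (n := n'.+1)); try lia.
    rewrite (kF (n := n')); try lia.
    rewrite /= (_ : al n'.+1 = al n' + z n'.+1); first exact: addF2KK.
    rewrite /al big_nat_recr //=; lia.
- move=> hff; have [e1 e2] := isFF_F hff.
  have /andP [a1 a2] := kFpos e1; have /andP [b1 b2] := kFpos e2.
  have := G1 n b1 a2; rewrite ec_FF // => /addF2_eq0 //.
Qed.

Lemma nzb lo q n : (lo <= n)%N -> (n <= lo + q)%N -> ~~ isz (kindc lo q n).
Proof. move=> h1 h2; case: (eqVneq n lo) => [->|ne]; first exact: nzH. apply: nzF => //; lia. Qed.

Lemma run lo1 q1 lo2 q2 (f : cm lo1 q1 lo2 q2) :
  @is_chain_map (cellc lo1 q1) (cellc lo2 q2) f ->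
  forall n, (lo1 < n)%N -> (lo2 < n)%N -> (n <= lo1 + q1)%N -> (n <= lo2 + q2)%N ->
  ec (f n) = if (lo1 < lo2)%N then 0 else ec (f lo1).
Proof.
move=> hf; elim=> [|n IH] // h1 h2 h3 h4.
have E := chain_sc hf (n:=n) (nzF h1 h3) (nzb (lo:=lo2) (q:=q2) (n:=n) ltac:(lia) ltac:(lia)).
have key1 : forall (k1 k2 k3 k4 : kind) (e1 e2 : 'F_2), k1 = KF -> k2 = KF -> k3 = KF -> k4 = KF ->
   t1f k1 k2 k3 e1 = t2f k2 k4 e2 -> e2 = e1 by move=> ? ? ? ? ? ? -> -> -> ->.
have key2 : forall (k1 k2 k3 k4 : kind) (e1 e2 : 'F_2), k1 = KH -> k2 = KF -> k4 = KF ->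
   t1f k1 k2 k3 e1 = t2f k2 k4 e2 -> e2 = e1 by move=> ? ? k3 ? ? ? -> -> ->; case: k3.
have key3 : forall (k1 k2 k3 k4 : kind) (e1 e2 : 'F_2), k1 = KF -> k2 = KF -> k3 = KH -> k4 = KF ->
   t1f k1 k2 k3 e1 = t2f k2 k4 e2 -> e2 = 0 by move=> ? ? ? ? ? ? -> -> -> ->.
case: (eqVneq n lo1) => [en|ne1].
- subst n. rewrite (key2 _ _ _ _ _ _ (kH _ _) (kF _ _) (kF _ _) E); try lia.
  by rewrite ifN //; lia.
case: (eqVneq n lo2) => [en|ne2].
- subst n. rewrite (key3 _ _ _ _ _ _ (kF _ _) (kF _ _) (kH _ _) (kF _ _) E); try lia.
  by rewrite ifT //; lia.
rewrite (key1 _ _ _ _ _ _ (kF _ _) (kF _ _) (kF _ _) (kF _ _) E); try lia.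
apply: IH; lia.
Qed.

Lemma ec_z k1 k2 (m : mor (modOf k1) (modOf k2)) : isz k1 || isz k2 -> ec m = 0.
Proof. by case: k1 m; case: k2. Qed.
Lemma xco_z k1 k2 (m : mor (modOf k1) (modOf k2)) : isz k1 || isz k2 -> xco m = 0.
Proof. by case: k1 m; case: k2. Qed.

Lemma topL lo1 q1 lo2 q2 (f : cm lo1 q1 lo2 q2) :
  @is_chain_map (cellc lo1 q1) (cellc lo2 q2) f ->
  (lo2 <= lo1)%N -> (lo2 + q2 < lo1 + q1)%N -> ec (f lo1) = 0.
Proof.
move=> hf h1 h2.
case: (ltnP (lo2 + q2) lo1) => h3.
  by apply: ec_z; rewrite (k0r (lo := lo2)) ?orbT.
have E := chain_sc hf (n:=lo2 + q2) (nzF (lo:=lo1) (q:=q1) (n:=(lo2+q2).+1) ltac:(lia) ltac:(lia))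
           (nzb (lo:=lo2) (q:=q2) (n:=lo2 + q2) ltac:(lia) ltac:(lia)).
case: (eqVneq lo1 (lo2 + q2)) => [e|ne].
- have key : forall (k1 k2 k3 k4 : kind) (e1 e2 : 'F_2), k1 = KH -> k2 = KF -> k4 = K0 ->
     t1f k1 k2 k3 e1 = t2f k2 k4 e2 -> e1 = 0 by move=> ? ? k3 ? ? ? -> -> ->; case: k3.
  subst lo1.
  have := key _ _ _ _ _ _ (kH _ _) (kF _ _) (k0r _) E. apply; lia.
- have key : forall (k1 k2 k3 k4 : kind) (e1 e2 : 'F_2), k1 = KF -> k2 = KF -> k3 = KF -> k4 = K0 ->
     t1f k1 k2 k3 e1 = t2f k2 k4 e2 -> e1 = 0 by move=> ? ? ? ? ? ? -> -> -> ->.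
  have := key _ _ _ _ _ _ (kF _ _) (kF _ _) (kF _ _) (k0r _) E.
  rewrite (run hf (n:=lo2 + q2)) ?ifN; try lia. apply; lia.
Qed.

Lemma Inv1 lo1 q1 lo2 q2 (f g : cm lo1 q1 lo2 q2) :
  @homotopic (cellc lo1 q1) (cellc lo2 q2) f g ->
  (lo2 <= lo1)%N -> (lo1 <= lo2 + q2)%N -> xco (msub (f lo1) (g lo1)) = 0.
Proof.
move=> H h1 h2; have [e He] := homot_sc H.
rewrite (He lo1 (nzH _ _) (nzb h1 h2)) kH.
by case: (kprev lo1 q1 lo1); case: (kindc lo2 q2 lo1); case: (kindc lo2 q2 lo1.+1); rewrite /= addr0.
Qed.

Lemma t2w lo2 q2 n (e : 'F_2) : (lo2 <= n)%N -> (n <= lo2 + q2)%N ->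
  t2f KF (kindc lo2 q2 n.+1) e = if (n < lo2 + q2)%N then e else 0.
Proof.
move=> h1 h2; case: ltnP => h3; first by rewrite kF //; lia.
by rewrite k0r //; lia.
Qed.

Lemma Inv3 lo1 q1 lo2 q2 (f g : cm lo1 q1 lo2 q2) :
  @homotopic (cellc lo1 q1) (cellc lo2 q2) f g ->
  (lo1.+2 <= lo2)%N -> (lo2 + q2 <= lo1 + q1)%N ->
  \sum_(lo2 <= k < ((lo2 + q2)%N).+1) xco (msub (f k) (g k)) = 0.
Proof.
move=> H h1 h2; have [e He] := homot_sc H.
pose w k := if (k < lo2 + q2)%N then e k else 0.
suff: forall j, (lo2 + j <= lo2 + q2)%N ->
   \sum_(lo2 <= k < ((lo2 + j)%N).+1) xco (msub (f k) (g k)) = w (lo2 + j)%N.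
  by move=> /(_ q2 (leqnn _)); rewrite /w ltnn.
elim=> [|j IH] hj.
- rewrite addn0 big_nat1.
  have [n' en] : exists n', lo2 = n'.+1 by exists lo2.-1; lia.
  rewrite (He lo2 (nzF (lo:=lo1) (q:=q1) (n:=lo2) ltac:(lia) ltac:(lia)) (nzH _ _)).
  rewrite kH (kF (lo:=lo1) (n:=lo2)); try lia.
  rewrite (t2w (e lo2) (leqnn _)); last lia.
  rewrite en /= (kF (lo:=lo1) (n:=n')); try lia.
  by rewrite add0r /w en.
- rewrite addnS big_nat_recr /=; last lia.
  rewrite IH; last lia.
  rewrite (He (lo2 + j)%N.+1 (nzF (lo:=lo1) (q:=q1) (n:=(lo2+j).+1) ltac:(lia) ltac:(lia))
             (nzF (lo:=lo2) (q:=q2) (n:=(lo2+j).+1) ltac:(lia) ltac:(lia))).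
  rewrite (kF (lo:=lo1) (n:=(lo2+j).+1)); try lia.
  rewrite (kF (lo:=lo2) (n:=(lo2+j).+1)); try lia.
  rewrite (t2w (e (lo2 + j)%N.+1)); try lia.
  rewrite /= (kF (lo:=lo1) (n:=(lo2 + j)%N)); try lia.
  rewrite /w ifT; last lia.
  by rewrite -addF2KK.
Qed.

Lemma ec_mk k1 k2 x y : ec (mk k1 k2 x y) = if isz k1 || isz k2 then 0 else ecs k1 k2 x y.
Proof. by rewrite /ec xco_mk yco_mk; case: k1; case: k2. Qed.
Lemma ec_nFF k1 k2 (m : mor (modOf k1) (modOf k2)) : ~~ isFF k1 k2 -> ec m = xco m.
Proof. by rewrite /ec /ecs => /negbTE ->. Qed.
Lemma ec_mzero k1 k2 : ec (mzero : mor (modOf k1) (modOf k2)) = 0.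
Proof. by rewrite mzero_mk ec_mk /ecs; case: ifP => //; case: ifP; rewrite ?addr0. Qed.
Lemma xco_mzero k1 k2 : xco (mzero : mor (modOf k1) (modOf k2)) = 0.
Proof. by rewrite mzero_mk xco_mk; case: ifP. Qed.

Section Maps.
Variables a b s t : nat.
Lemma is_mor_map0 n : is_mor (map0 a b s t n).
Proof. rewrite /map0 mzero_mk; exact: is_mor_mk. Qed.
Lemma is_mor_map1 n : is_mor (map1 a b s t n).
Proof. rewrite /map1 std_mk; exact: is_mor_mk. Qed.
Lemma is_mor_map2 n : is_mor (map2 a b s t n).
Proof. rewrite /map2 std_mk; exact: is_mor_mk. Qed.
Lemma is_mor_map3 n : is_mor (map3 a b s t n).
Proof. rewrite /map3; case: ifP => _; [rewrite std_mk|rewrite mzero_mk]; exact: is_mor_mk. Qed.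
End Maps.

Lemma caseA a b s t (f : cmap a b s t) (hf : is_chain_map f) :
  (b <= a)%N -> (t <= s)%N -> a = s -> (t <= b)%N -> homotopic f (map0 a b s t).
Proof.
move=> hba hts has htb; have Hf := proj1 hf.
apply: (@BU (a - b) b (s - t).+1 t f (map0 a b s t)); try lia; first exact: Hf.
- exact: is_mor_map0.
- move=> n h1 h2.
  rewrite ec_sub /map0 ec_mzero subr0.
  rewrite (run hf (n:=n)); try lia. rewrite ifT //; lia.
Qed.

Lemma caseB0 a b s t (f : cmap a b s t) (hf : is_chain_map f) :
  (b <= a)%N -> (t <= s)%N -> (s < a)%N ->
  (((s - t).+1 <= a - b)%N -> ec (f (a - b)%N) = 0) ->
  (((a - b).+2 <= (s - t).+1)%N -> \sum_((s - t).+1 <= k < (((s - t).+1 + t)%N).+1) xco (f k) = 0) ->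
  homotopic f (map0 a b s t).
Proof.
move=> hba hts hsa H1 H3; have Hf := proj1 hf.
apply: (@TD (a - b) b (s - t).+1 t f (map0 a b s t)); try lia; first exact: Hf.
- exact: is_mor_map0.
- move=> n h1 h2 h3.
  rewrite ec_sub /map0 ec_mzero subr0.
  rewrite (run hf (n:=n)); try lia. case: ifP => // h4; apply: H1; lia.
- move=> h; rewrite xco_sub /map0 xco_mzero subr0 -ec_nFF ?H1 // kH //.
- move=> h; rewrite (eq_bigr (fun k => xco (f k))); first exact: H3.
  by move=> k _; rewrite xco_sub /map0 xco_mzero subr0.
Qed.

Lemma kH' lo q n : n = lo -> kindc lo q n = KH.
Proof. by move=> ->; rewrite kH. Qed.

Lemma caseBid a b s t (f : cmap a b s t) (hf : is_chain_map f) :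
  (b <= a)%N -> (t <= s)%N -> a = s.+1 -> (a - b = (s - t).+1)%N -> xco (f (a - b)%N) = 1 ->
  homotopic f (map1 a b s t).
Proof.
move=> hba hts hsa hL H1; have Hf := proj1 hf.
apply: (@TD (a - b) b (s - t).+1 t f (map1 a b s t)); try lia; first exact: Hf.
- exact: is_mor_map1.
- move=> n h1 h2 h3.
  rewrite ec_sub (run hf (n:=n)); try lia. rewrite ifN; last lia.
  rewrite ec_nFF ?kH // H1 /map1 std_mk ec_mk (kF (lo:=a-b) (n:=n)); try lia.
  rewrite (kF (lo:=(s-t).+1) (n:=n)); try lia.
  by rewrite /ecs /= addr0 subrr.
- move=> h; rewrite xco_sub H1 /map1 std_mk xco_mk kH (@kH' (s-t).+1 t (a-b)) //.
  by rewrite /= subrr.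
Qed.

Lemma caseBp a b s t (f : cmap a b s t) (hf : is_chain_map f) :
  (b <= a)%N -> (t <= s)%N -> a = s.+1 -> ((s - t).+1 < a - b)%N -> xco (f (a - b)%N) = 1 ->
  homotopic f (map2 a b s t).
Proof.
move=> hba hts hsa hL H1; have Hf := proj1 hf.
apply: (@TD (a - b) b (s - t).+1 t f (map2 a b s t)); try lia; first exact: Hf.
- exact: is_mor_map2.
- move=> n h1 h2 h3.
  rewrite ec_sub (run hf (n:=n)); try lia. rewrite ifN; last lia.
  rewrite ec_nFF ?kH // H1 /map2.
  have -> : (n == a - b)%N = false by apply/eqP; lia.
  rewrite std_mk ec_mk (kF (lo:=a-b) (n:=n)); try lia.
  rewrite (kF (lo:=(s-t).+1) (n:=n)); try lia.
  by rewrite /ecs /= addr0 subrr.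
- move=> h; rewrite xco_sub H1 /map2 eqxx std_mk xco_mk kH (kF (lo:=(s-t).+1) (q:=t) (n:=a-b)); try lia.
  by rewrite /= subrr.
Qed.

Lemma sum_map3 a b s t : (a - b < s.+1)%N -> (s < a)%N -> (t <= s)%N -> (b <= a)%N ->
  \sum_((s - t).+1 <= k < (((s - t).+1 + t)%N).+1) xco (map3 a b s t k) = 1.
Proof.
move=> h1 h2 h3 h4.
rewrite big_nat_recr /=; last lia.
rewrite big_nat_cond big1; last first.
  move=> k /andP[/andP[k1 k2] _]; rewrite /map3.
  have -> : (k == s.+1) = false by apply/eqP; lia.
  exact: xco_mzero.
rewrite add0r /map3.
have -> : (((s - t).+1 + t)%N == s.+1) = true by apply/eqP; lia.
rewrite std_mk xco_mk (kF (lo:=a-b) (n:=((s - t).+1 + t)%N)); try lia.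
case: (eqVneq t 0%N) => [t0|tn0].
- rewrite (@kH' (s-t).+1 t ((s - t).+1 + t)%N) //; lia.
- rewrite (kF (lo:=(s-t).+1) (q:=t) (n:=((s - t).+1 + t)%N)) //; lia.
Qed.

Lemma caseB3 a b s t (f : cmap a b s t) (hf : is_chain_map f) :
  (b <= a)%N -> (t <= s)%N -> (s < a)%N -> ((a - b).+2 <= (s - t).+1)%N ->
  \sum_((s - t).+1 <= k < (((s - t).+1 + t)%N).+1) xco (f k) = 1 ->
  homotopic f (map3 a b s t).
Proof.
move=> hba hts hsa hL H1; have Hf := proj1 hf.
apply: (@TD (a - b) b (s - t).+1 t f (map3 a b s t)); try lia; first exact: Hf.
- exact: is_mor_map3.
- move=> n h1 h2 h3.
  rewrite ec_sub (run hf (n:=n)); try lia. rewrite ifT; last lia.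
  rewrite /map3; case: ifP => _; last by rewrite ec_mzero subrr.
  rewrite std_mk ec_mk (kF (lo:=a-b) (n:=n)); try lia.
  rewrite (kF (lo:=(s-t).+1) (n:=n)); try lia.
  by rewrite /ecs /= sub0r oppF2; apply/eqP.
- move=> h.
  rewrite (eq_bigr (fun k => xco (f k) - xco (map3 a b s t k))); last by move=> k _; rewrite xco_sub.
  rewrite sumrB H1 sum_map3 ?subrr //; lia.
Qed.

End Aux.
Import Aux.

Lemma F2_10 : (1 : 'F_2) <> 0. Proof. by move/eqP. Qed.

Theorem lemma8p7 (a b s t : nat)
  (hba : (b <= a)%N) (hts : (t <= s)%N) (hsa : (s <= a)%N)
  (heq : a = s -> (t <= b)%N)
  (f : cmap a b s t) (hf : is_chain_map f) :
  exactly_one4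
    (tp_dcell a b = tp_cell s t /\ cowt_dcell a b = cowt_cell s t /\
       homotopic f (map1 a b s t))
    (tp_dcell a b = tp_cell s t /\ cowt_dcell a b > cowt_cell s t /\
       homotopic f (map2 a b s t))
    (tp_dcell a b >= tp_cell s t /\ cowt_dcell a b <= cowt_cell s t - 2 /\
       homotopic f (map3 a b s t))
    (homotopic f (map0 a b s t)).
Proof.
rewrite /exactly_one4 /tp_dcell /tp_cell /cowt_dcell /cowt_cell.
split.
- case: (eqVneq a s) => [eas|nas].
    right; right; right; apply: caseA => //; exact: heq.
  have hsa' : (s < a)%N by lia.
  case: (leqP ((s - t).+1) (a - b)) => hML.
  + case: (eqVneq a s.+1) => [ea|nea]; last first.
      right; right; right; apply: caseB0 => //; last lia.
      move=> _; apply: (topL hf); lia.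
    case: (F2cases (xco (f (a - b)%N))) => hc.
      right; right; right; apply: caseB0 => //; last lia.
      by move=> _; rewrite ec_nFF ?kH.
    case: (eqVneq (a - b)%N (s - t).+1) => [eL|nL].
    * left; split; [lia|split; [lia|]]; exact: caseBid.
    * right; left; split; [lia|split; [lia|]]; apply: caseBp => //; lia.
  + case: (eqVneq (a - b).+1 (s - t).+1) => [e1|ne1].
      right; right; right; apply: caseB0 => //; lia.
    case: (F2cases (\sum_((s - t).+1 <= k < (((s - t).+1 + t)%N).+1) xco (f k))) => hk.
      right; right; right; apply: caseB0 => //; lia.
    right; right; left; split; [lia|split; [lia|]]; apply: caseB3 => //; lia.
- split; first by move=> [[h1 [h2 _]] [h3 [h4 _]]]; lia.
  split; first by move=> [[h1 [h2 _]] [h3 [h4 _]]]; lia.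
  split.
    move=> [[h1 [h2 H1]] H4].
    have X1 := Inv1 H1 ltac:(lia) ltac:(lia); have X4 := Inv1 H4 ltac:(lia) ltac:(lia).
    rewrite xco_sub /map0 xco_mzero subr0 in X4.
    rewrite xco_sub X4 /map1 std_mk xco_mk kH (@kH' (s-t).+1 t (a-b)) /= in X1; last lia.
    by move: X1; rewrite sub0r oppF2; apply: F2_10.
  split; first by move=> [[h1 [h2 _]] [h3 [h4 _]]]; lia.
  split.
    move=> [[h1 [h2 H1]] H4].
    have X1 := Inv1 H1 ltac:(lia) ltac:(lia); have X4 := Inv1 H4 ltac:(lia) ltac:(lia).
    rewrite xco_sub /map0 xco_mzero subr0 in X4.
    rewrite xco_sub X4 /map2 eqxx std_mk xco_mk kH (kF (lo:=(s-t).+1) (q:=t) (n:=a-b)) /= in X1; try lia.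
    by move: X1; rewrite sub0r oppF2; apply: F2_10.
  move=> [[h1 [h2 H3]] H4].
  have X3 := Inv3 H3 ltac:(lia) ltac:(lia); have X4 := Inv3 H4 ltac:(lia) ltac:(lia).
  have E3 : \sum_((s - t).+1 <= k < (((s - t).+1 + t)%N).+1) xco (msub (f k) (map3 a b s t k)) =
            \sum_((s - t).+1 <= k < (((s - t).+1 + t)%N).+1) (xco (f k) - xco (map3 a b s t k)).
    by apply: eq_bigr => k _; rewrite xco_sub.
  have E4 : \sum_((s - t).+1 <= k < (((s - t).+1 + t)%N).+1) xco (msub (f k) (map0 a b s t k)) =
            \sum_((s - t).+1 <= k < (((s - t).+1 + t)%N).+1) xco (f k).
    by apply: eq_bigr => k _; rewrite xco_sub /map0 xco_mzero subr0.
  rewrite E3 sumrB sum_map3 in X3; try lia.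
  rewrite E4 in X4; rewrite X4 sub0r oppF2 in X3.
  exact: F2_10.
Qed.
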